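(* The Gaussian lattice $\Lambda_{1,6}$ has a $\mathcal G$-basis $e_1,\dots,e_7$ indexed by the nodes of the $E_7$ Coxeter diagram such that $h(e_j,e_j)=-2$, $h(e_j,e_k)=1+i$ and $h(e_k,e_j)=1-i$ whenever $j<k$ are joined in the diagram, and $h(e_j,e_k)=0$ when $j\ne k$ are not joined.
   Context: Let $\mathcal G=\mathbb Z[i]$. $\Lambda_{1,6}=\mathcal G^7$ with Hermitian form $h(x,y)=\bar x^tHy$, $H=\begin{pmatrix}-2&1+i\\1-i&-2\end{pmatrix}^{\oplus3}\oplus(2)$ (block diagonal). The $E_7$ Coxeter diagram has nodes $1,\dots,7$, with edges $1\!-\!2,\ 2\!-\!3,\ 3\!-\!4,\ 4\!-\!5,\ 5\!-\!6$ and $3\!-\!7$. *)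

(* Defs.v *)
From HB Require Import structures.
From mathcomp Require Import all_boot all_order all_algebra all_field algC.
Set Implicit Arguments. Unset Strict Implicit. Unset Printing Implicit Defensive.
Import Order.TTheory GRing.Theory Num.Theory.
Local Open Scope ring_scope.

Definition gauss (x : algC) : Prop :=
  exists a b : int, x = a%:~R + b%:~R * 'i.

Definition gvec (v : 'cV[algC]_7) : Prop := forall i, gauss (v i 0).

(* the Gram matrix H = [[-2,1+i],[1-i,-2]]^{+3} (+) (2), 0-based indices *)
Definition Hmat : 'M[algC]_7 :=
  \matrix_(i < 7, j < 7)
    (if i == j then (if (i : nat) == 6%N then 2 else -2)
     else if ((j : nat) == i.+1) && ~~ odd i && ((i : nat) < 6)%N then 1 + 'i
     else if ((i : nat) == j.+1) && ~~ odd j && ((j : nat) < 6)%N then 1 - 'i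
     else 0).

Definition h (x y : 'cV[algC]_7) : algC :=
  ((map_mx Num.conj x)^T *m Hmat *m y) 0 0.

Definition is_G_basis (e : 'I_7 -> 'cV[algC]_7) : Prop :=
  (forall j, gvec (e j)) /\
  (forall v, gvec v ->
     exists c : 'I_7 -> algC, (forall j, gauss (c j)) /\ v = \sum_j c j *: e j) /\
  (forall c d : 'I_7 -> algC, (forall j, gauss (c j)) -> (forall j, gauss (d j)) ->
     \sum_j c j *: e j = \sum_j d j *: e j -> c = d).

(* E7 Coxeter diagram; node k (1-based) is index k-1.
   edges 1-2, 2-3, 3-4, 4-5, 5-6, 3-7 *)
Definition e7edge0 (j k : nat) : bool :=
  [|| (j == 0%N) && (k == 1%N), (j == 1%N) && (k == 2%N), (j == 2%N) && (k == 3%N),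
      (j == 3%N) && (k == 4%N), (j == 4%N) && (k == 5%N) | (j == 2%N) && (k == 6%N)].
Definition e7edge (j k : 'I_7) : bool := e7edge0 j k || e7edge0 k j.

(* Main.v *)
Require Import Defs.
From HB Require Import structures.
From mathcomp Require Import all_boot all_order all_algebra all_field algC.
From mathcomp Require Import ring.
From Stdlib Require Import FunctionalExtensionality.
Import Order.TTheory GRing.Theory Num.Theory.
Local Open Scope ring_scope.

Definition gi (p : int * int) : algC := p.1%:~R + p.2%:~R * 'i.
Definition gadd (p q : int * int) : int * int := (p.1 + q.1, p.2 + q.2).
Definition gmul (p q : int * int) : int * int :=
  (p.1 * q.1 - p.2 * q.2, p.1 * q.2 + p.2 * q.1).
Definition gconj (p : int * int) : int * int := (p.1, - p.2).

Lemma gi_add p q : gi (gadd p q) = gi p + gi q.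
Proof. rewrite /gi /= !intrD; ring. Qed.

Lemma gi_mul p q : gi (gmul p q) = gi p * gi q.
Proof.
rewrite /gi /= intrB intrD !intrM.
have i2 : 'i * 'i = -1 :> algC by rewrite -expr2 sqrCi.
set I := 'i in i2 *.
transitivity ((p.1%:~R + p.2%:~R * I) * (q.1%:~R + q.2%:~R * I) -
   p.2%:~R * q.2%:~R * (I * I + 1) : algC); last by rewrite i2 addNr mulr0 subr0.
ring.
Qed.

Lemma gi_conj p : Num.conj (gi p) = gi (gconj p).
Proof.
rewrite /gi /= rmorphD rmorphM !rmorph_int.
set X := (_ 'i). have -> : X = - 'i by exact: conjCi.
by rewrite intrN mulrN mulNr.
Qed.

Fixpoint sumG (f : nat -> int * int) (n : nat) : int * int :=
  match n with 0 => (0, 0) | S m => gadd (sumG f m) (f m) end.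

Lemma gi_sum (f : nat -> int * int) n : \sum_(a < n) gi (f (nat_of_ord a)) = gi (sumG f n).
Proof.
elim: n => [|n IH]; first by rewrite big_ord0 /gi /= mul0r addr0.
by rewrite big_ord_recr /= IH gi_add.
Qed.

Definition gz (a b : int) : int * int := (a, b).

Definition Elist : seq (seq (int * int)) :=
 [:: [:: gz 0 1; gz 0 0; gz 0 1; gz 0 0; gz (-1) 1; gz 0 1; gz (-1) (-1)];
     [:: gz 0 0; gz 0 0; gz 0 0; gz 0 0; gz 1 0; gz 0 0; gz 0 0];
     [:: gz 0 0; gz 0 0; gz 0 0; gz 0 0; gz 0 0; gz 1 0; gz 0 0];
     [:: gz 0 0; gz 0 0; gz 0 0; gz 1 0; gz 0 (-1); gz (-1) (-1); gz 1 0];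
     [:: gz 0 0; gz 0 0; gz 0 (-1); gz (-1) (-1); gz 0 0; gz 0 0; gz 0 0];
     [:: gz 0 0; gz 0 1; gz 0 0; gz 0 1; gz 0 0; gz 0 0; gz 0 1];
     [:: gz 0 0; gz 1 0; gz 0 0; gz 0 0; gz 0 (-1); gz (-1) (-1); gz 1 0]].

Definition Flist : seq (seq (int * int)) :=
 [:: [:: gz 0 (-1); gz 0 0; gz 0 0; gz 0 0; gz 0 0; gz 0 0; gz 0 0];
     [:: gz 0 0; gz 0 (-1); gz 1 1; gz 0 (-1); gz 1 0; gz 0 0; gz 0 2];
     [:: gz 1 0; gz (-1) (-1); gz 2 0; gz (-1) (-1); gz 0 0; gz 1 0; gz 2 2];
     [:: gz 1 (-1); gz (-1) 0; gz 0 0; gz 0 0; gz 0 0; gz 0 0; gz 1 0];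
     [:: gz 0 (-1); gz 0 0; gz 0 1; gz 0 0; gz 0 0; gz 0 0; gz 0 0];
     [:: gz 0 0; gz 0 (-1); gz 1 1; gz 0 (-1); gz 0 0; gz 0 0; gz 0 1];
     [:: gz 0 0; gz 0 0; gz 1 (-1); gz (-1) 0; gz 0 0; gz 0 0; gz 1 0]].

Definition EG (j a : nat) : int * int := nth (gz 0 0) (nth [::] Elist j) a.
Definition FG (j a : nat) : int * int := nth (gz 0 0) (nth [::] Flist j) a.

Definition HG (i j : nat) : int * int :=
  if i == j then (if i == 6%N then gz 2 0 else gz (-2) 0)
  else if (j == i.+1) && ~~ odd i && (i < 6)%N then gz 1 1
  else if (i == j.+1) && ~~ odd j && (j < 6)%N then gz 1 (-1)
  else gz 0 0.

Lemma HmatE (a b : 'I_7) : Hmat a b = gi (HG a b).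
Proof.
rewrite mxE /HG /gi /=.
case: a => [[|[|[|[|[|[|[|a]]]]]]] Ha] //;
case: b => [[|[|[|[|[|[|[|b]]]]]]] Hb] //=;
rewrite ?mul0r ?addr0 ?mul1r ?mulN1r //.
Qed.

Definition e (j : 'I_7) : 'cV[algC]_7 := \col_(a < 7) gi (EG j a).

Definition hG (j k : nat) : int * int :=
  sumG (fun b => gmul (sumG (fun a => gmul (gconj (EG j a)) (HG a b)) 7) (EG k b)) 7.

Lemma h_e j k : h (e j) (e k) = gi (hG j k).
Proof.
rewrite /h /hG -gi_sum mxE; apply: eq_bigr => b _.
rewrite gi_mul -gi_sum !mxE; congr (_ * _).
apply: eq_bigr => a _.
by rewrite HmatE !mxE gi_mul gi_conj.
Qed.

Definition I7 := iota 0 7.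
Lemma chk_diag : all (fun j => hG j j == gz (-2) 0) I7.
Proof. vm_compute. reflexivity. Qed.
Lemma chk_edge : all (fun j => all (fun k => (j < k)%N ==> (e7edge0 j k || e7edge0 k j) ==>
   (hG j k == gz 1 1) && (hG k j == gz 1 (-1))) I7) I7.
Proof. vm_compute. reflexivity. Qed.
Lemma chk_zero : all (fun j => all (fun k => (j != k) ==> ~~ (e7edge0 j k || e7edge0 k j) ==>
   (hG j k == gz 0 0)) I7) I7.
Proof. vm_compute. reflexivity. Qed.
Lemma chk_EF : all (fun a => all (fun b =>
   sumG (fun j => gmul (EG j a) (FG j b)) 7 == if a == b then gz 1 0 else gz 0 0) I7) I7.
Proof. vm_compute. reflexivity. Qed.
Lemma chk_FE : all (fun j => all (fun k =>
   sumG (fun a => gmul (FG j a) (EG k a)) 7 == if j == k then gz 1 0 else gz 0 0) I7) I7.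
Proof. vm_compute. reflexivity. Qed.

Lemma inI7 (j : 'I_7) : (nat_of_ord j) \in I7.
Proof. by rewrite mem_iota ltn_ord. Qed.

Lemma chk2 (P : nat -> nat -> bool) (j k : 'I_7) :
  all (fun j => all (fun k => P j k) I7) I7 -> P j k.
Proof. by move=> /allP /(_ _ (inI7 j)) /allP /(_ _ (inI7 k)). Qed.

Lemma gi_delta (b : bool) : gi (if b then gz 1 0 else gz 0 0) = b%:R.
Proof. by case: b; rewrite /gi /= ?mul0r ?addr0. Qed.

Lemma gaussP x : gauss x <-> exists p, x = gi p.
Proof.
split; first by move=> [a [b ->]]; exists (a, b).
by move=> [[a b] ->]; exists a, b.
Qed.

Lemma gaussD x y : gauss x -> gauss y -> gauss (x + y).
Proof.
move=> /gaussP [p ->] /gaussP [q ->]; apply/gaussP; exists (gadd p q).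
by rewrite gi_add.
Qed.

Lemma gaussM x y : gauss x -> gauss y -> gauss (x * y).
Proof.
move=> /gaussP [p ->] /gaussP [q ->]; apply/gaussP; exists (gmul p q).
by rewrite gi_mul.
Qed.

Lemma gauss0 : gauss 0.
Proof. by apply/gaussP; exists (gz 0 0); rewrite /gi /= mul0r addr0. Qed.

Lemma gauss_gi p : gauss (gi p).
Proof. by apply/gaussP; exists p. Qed.

Lemma gauss_sum (F : 'I_7 -> algC) : (forall j, gauss (F j)) -> gauss (\sum_j F j).
Proof.
move=> HF; apply: (big_ind gauss) => //; [exact: gauss0 | exact: gaussD].
Qed.

Lemma EF (a b : 'I_7) :
  \sum_(j < 7) gi (EG j a) * gi (FG j b) = (a == b)%:R.
Proof.
have := chk2 (fun a b => sumG (fun j => gmul (EG j a) (FG j b)) 7 ==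
   if a == b then gz 1 0 else gz 0 0) a b chk_EF.
move/eqP => H; rewrite -[(a == b)]/(nat_of_ord a == nat_of_ord b) -gi_delta -H -gi_sum.
by apply: eq_bigr => j _; rewrite gi_mul.
Qed.

Lemma FE (j k : 'I_7) :
  \sum_(a < 7) gi (FG j a) * gi (EG k a) = (j == k)%:R.
Proof.
have := chk2 (fun j k => sumG (fun a => gmul (FG j a) (EG k a)) 7 ==
   if j == k then gz 1 0 else gz 0 0) j k chk_FE.
move/eqP => H; rewrite -[(j == k)]/(nat_of_ord j == nat_of_ord k) -gi_delta -H -gi_sum.
by apply: eq_bigr => a _; rewrite gi_mul.
Qed.

Lemma recov (c : 'I_7 -> algC) (j : 'I_7) :
  \sum_(a < 7) gi (FG j a) * (\sum_k c k *: e k) a 0 = c j.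
Proof.
under eq_bigr => a _ do rewrite summxE big_distrr.
rewrite exchange_big /=.
under eq_bigr => k _ do under eq_bigr => a _ do rewrite !mxE.
transitivity (\sum_(k < 7) c k * (j == k)%:R).
  apply: eq_bigr => k _; rewrite -FE big_distrr; apply: eq_bigr => a _ /=.
  by rewrite mulrCA.
rewrite (bigD1 j) //= eqxx mulr1 big1 ?addr0 // => k /negbTE.
by rewrite eq_sym => ->; rewrite mulr0.
Qed.

Theorem lemma4p14 :
  exists e : 'I_7 -> 'cV[algC]_7,
    is_G_basis e /\
    (forall j, h (e j) (e j) = -2) /\
    (forall j k : 'I_7, (j < k)%N -> e7edge j k ->
       h (e j) (e k) = 1 + 'i /\ h (e k) (e j) = 1 - 'i) /\
    (forall j k : 'I_7, j != k -> ~~ e7edge j k -> h (e j) (e k) = 0).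
Proof.
exists e; split; [split; [|split] | split; [|split]].
- by move=> j a; rewrite !mxE; apply: gauss_gi.
- move=> v Hv.
  exists (fun j => \sum_(b < 7) gi (FG j b) * v b 0); split.
    by move=> j; apply: gauss_sum => b; apply: gaussM; [apply: gauss_gi | apply: Hv].
  apply/matrixP => a z; rewrite (ord1 z) summxE.
  under eq_bigr => j _ do rewrite !mxE big_distrl.
  rewrite exchange_big /=.
  transitivity (\sum_(b < 7) v b 0 * (a == b)%:R).
    rewrite (bigD1 a) //= eqxx mulr1 big1 ?addr0 // => b /negbTE.
    by rewrite eq_sym => ->; rewrite mulr0.
  apply: eq_bigr => b _; rewrite -EF big_distrr; apply: eq_bigr => j _ /=.
  by ring.
- move=> c d _ _ Hcd; apply: functional_extensionality => j.
  by rewrite -(recov c j) Hcd recov.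
- move=> j; rewrite h_e.
  have /allP /(_ _ (inI7 j)) /eqP -> := chk_diag.
  by rewrite /gi /= mul0r addr0.
- move=> j k Hjk Hed; rewrite !h_e.
  have := chk2 (fun j k => (j < k)%N ==> (e7edge0 j k || e7edge0 k j) ==>
   (hG j k == gz 1 1) && (hG k j == gz 1 (-1))) j k chk_edge.
  rewrite /= Hjk.
  move: Hed; rewrite /e7edge => -> /andP [/eqP -> /eqP ->].
  by rewrite /gi /= mul1r mulN1r.
- move=> j k Hjk Hed; rewrite h_e.
  have := chk2 (fun j k => (j != k) ==> ~~ (e7edge0 j k || e7edge0 k j) ==>
   (hG j k == gz 0 0)) j k chk_zero.
  rewrite /= Hjk.
  move: Hed; rewrite /e7edge => -> /eqP ->.
  by rewrite /gi /= mul0r addr0.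
Qed.
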